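(* Let $p$ be an odd prime and let $k$ be an integer with $2\le k\le p-1$. Let $T$ be an orthogonal trade in $B_p$ of index $(1,k)$. Then every symbol that occurs in $T$ occurs in $T$ at least $3$ times.
   Context: All arithmetic is modulo $p$, with elements of $\mathbb{Z}_p$ represented by residues $0,\dots,p-1$. A Latin square of order $p$ is viewed as a set of (row, column, symbol) triples in $\mathbb{Z}_p^3$. For $1\le k\le p-1$, $B_p(k)$ is the Latin square with symbol $ki+j$ in cell $(i,j)$, $i,j\in\mathbb{Z}_p$; $B_p=B_p(1)$. A Latin trade in a Latin square $L$ is a subset $T\subseteq L$ for which there is a partial Latin square $T'$ (a disjoint mate of $T$) such that $T$ and $T'$ occupy the same set of cells, $T\cap T'=\emptyset$, and each row (respectively column) of $T$ contains the same set of symbols as the corresponding row (column) of $T'$; then $(L\setminus T)\cup T'$ is a Latin square. Two Latin squares of order $p$ are orthogonal if superimposing them yields each of the $p^2$ ordered pairs of symbols exactly once. An orthogonal trade of index $(\ell,k)$ is a Latin trade $T\subseteq B_p(\ell)$ having a disjoint mate $T'$ such that $(B_p(\ell)\setminus T)\cup T'$ is orthogonal to $B_p(k)$. *)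

(* Defs.v *)
(* Elements of Z_p are represented by ordinals 'I_p (residues
   0..p-1); arithmetic is done on their nat values modulo p. *)
From mathcomp Require Import all_boot.
Set Implicit Arguments. Unset Strict Implicit. Unset Printing Implicit Defensive.

Definition triple (p : nat) := ('I_p * 'I_p * 'I_p)%type.

Definition trow {p} (t : triple p) : 'I_p := t.1.1.
Definition tcol {p} (t : triple p) : 'I_p := t.1.2.
Definition tsym {p} (t : triple p) : 'I_p := t.2.

Definition Bp (p k : nat) : {set triple p} :=
  [set t : triple p | nat_of_ord (tsym t) == (k * trow t + tcol t) %% p].

Definition partial_latin {p} (P : {set triple p}) : Prop :=
  forall t u, t \in P -> u \in P ->
    [/\ (trow t = trow u /\ tcol t = tcol u -> t = u),
        (trow t = trow u /\ tsym t = tsym u -> t = u) &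
        (tcol t = tcol u /\ tsym t = tsym u -> t = u)].

Definition cells {p} (P : {set triple p}) : {set 'I_p * 'I_p} :=
  [set (trow t, tcol t) | t in P].
Definition row_syms {p} (P : {set triple p}) (i : 'I_p) : {set 'I_p} :=
  [set tsym t | t in P & trow t == i].
Definition col_syms {p} (P : {set triple p}) (j : 'I_p) : {set 'I_p} :=
  [set tsym t | t in P & tcol t == j].

Definition disjoint_mate {p} (T T' : {set triple p}) : Prop :=
  [/\ partial_latin T', cells T = cells T', T :&: T' = set0,
      (forall i, row_syms T i = row_syms T' i) &
      (forall j, col_syms T j = col_syms T' j)].

Definition orthogonal {p} (L1 L2 : {set triple p}) : Prop :=
  forall a b : 'I_p,
    #|[set c : 'I_p * 'I_p | ((c.1, c.2, a) \in L1) && ((c.1, c.2, b) \in L2)]| = 1.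

Definition orthogonal_trade (p l k : nat) (T : {set triple p}) : Prop :=
  T \subset Bp p l /\
  exists T' : {set triple p},
    disjoint_mate T T' /\ orthogonal ((Bp p l :\: T) :|: T') (Bp p k).
Arguments orthogonal_trade : clear implicits.

(* Main.v *)
Require Import Defs.
From mathcomp Require Import all_boot zify.

Lemma cancel_mul p m a b : prime p -> ~~ (p %| m) -> a < p -> b < p ->
  m * a = m * b %[mod p] -> a = b.
Proof.
move=> pp ndm; wlog le: a b / a <= b.
  move=> W ap bp h; case: (leqP a b) => [l|/ltnW l]; first exact: W.
  by symmetry; apply: W.
move=> ap bp /eqP h; rewrite eq_sym eqn_mod_dvd ?leq_mul2l ?le ?orbT // -mulnBr in h.
rewrite Euclid_dvdM // (negbTE ndm) /= in h.
case: (posnP (b - a)) => [|pos]; first by move/eqP; rewrite subn_eq0 => ba; apply/eqP; rewrite eqn_leq le ba.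
have := dvdn_leq pos h; rewrite leqNgt => /negP; case.
by apply: leq_ltn_trans bp; apply: leq_subr.
Qed.

Lemma small_eq p a b : a < p -> b < p -> a = b %[mod p] -> a = b.
Proof. by move=> ap bp; rewrite !modn_small. Qed.

Lemma H1 p m i c1 c2 : prime p -> 0 < m < p -> i < p -> c1 < p ->
  (m*i + (c1+c2)%%p) %% p = (m.+1*c1 + c2) %% p -> i = c1.
Proof.
move=> pp /andP[m0 mp] ip cp; rewrite modnDmr mulSn (addnC c1 (m*c1)) -addnA.
move/eqP; rewrite eqn_modDr => /eqP h; apply: (@cancel_mul _ _ _ _ pp _ ip cp h).
by apply/negP => /(dvdn_leq m0); rewrite leqNgt mp.
Qed.

Lemma H2 p m i1 i2 j2 : i1 < p -> i2 < p ->
  (m*i1 + (i2+j2)%%p) %% p = (m.+1*i1 + j2) %% p -> i2 = i1.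
Proof.
move=> ip jp; rewrite modnDmr mulSn (addnC i1) -addnA.
move/eqP; rewrite eqn_modDl eqn_modDr => /eqP; exact: small_eq.
Qed.

Lemma H3 p m i1 i2 j1 : prime p -> m.+1 < p -> i1 < p -> i2 < p ->
  (m*i1 + (i1+j1)%%p) %% p = (m.+1*i2 + j1) %% p -> i1 = i2.
Proof.
move=> pp mp ip jp; rewrite modnDmr addnA (addnC _ i1) -mulSn.
move/eqP; rewrite eqn_modDr => /eqP h; apply: (@cancel_mul _ _ _ _ pp _ ip jp h).
by apply/negP => /(dvdn_leq (ltn0Sn m)); rewrite leqNgt mp.
Qed.
Lemma trip_ext p (t u : triple p) : trow t = trow u -> tcol t = tcol u -> tsym t = tsym u -> t = u.
Proof. by case: t => [[??]?]; case: u => [[??]?]; rewrite /trow/tcol/tsym /= => -> -> ->. Qed.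

Lemma Bp1_row p (t u : triple p) : t \in Bp p 1 -> u \in Bp p 1 ->
  trow t = trow u -> tsym t = tsym u -> t = u.
Proof.
move=> ht hu er es; apply: trip_ext => //; apply: val_inj.
move: ht hu; rewrite !inE !mul1n es er => /eqP -> /eqP /eqP.
by rewrite eqn_modDl => /eqP; apply: small_eq.
Qed.

Theorem lemma3p1 (p k : nat) (T : {set triple p}) :
  prime p -> odd p -> (2 <= k)%N -> (k <= p - 1)%N ->
  orthogonal_trade p 1 k T ->
  forall s : 'I_p, (exists2 t, t \in T & tsym t = s) ->
    (3 <= #|[set t in T | tsym t == s]|)%N.
Proof.
move=> pp _ k2 kp [sub [T' [[pl cellsEq disj rowE colE] orth]]] s [t0 t0T t0s].
set S := [set t in T | tsym t == s].
have p0 : 0 < p := prime_gt0 pp.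
have kp' : k < p by clear -kp p0; lia.
case: k k2 kp kp' orth => [//|k'] k2 _ kp orth.
have inB t : t \in T -> t \in Bp p 1 by move=> tT; apply: (subsetP sub).
have nTT' u : u \in T' -> u \notin T.
  move=> uT'; apply/negP => uT.
  have : u \in T :&: T' by rewrite inE uT uT'.
  by rewrite disj inE.
have FA u : u \in T' -> tsym u = s -> exists2 t, t \in S & trow t = trow u.
  move=> uT' us; have : tsym u \in row_syms T' (trow u) by apply/imsetP; exists u; rewrite // inE uT' /=.
  rewrite -rowE => /imsetP [t]; rewrite inE => /andP[tT /eqP tr] ts.
  by exists t => //; rewrite inE tT -ts us eqxx.
have FB u : u \in T' -> tsym u = s -> exists2 t, t \in S & tcol t = tcol u.
  move=> uT' us; have : tsym u \in col_syms T' (tcol u) by apply/imsetP; exists u; rewrite // inE uT' /=.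
  rewrite -colE => /imsetP [t]; rewrite inE => /andP[tT /eqP tr] ts.
  by exists t => //; rewrite inE tT -ts us eqxx.
have FC t : t \in S -> exists2 u, u \in T' & trow u = trow t /\ tsym u = s.
  rewrite inE => /andP[tT /eqP ts]; have : tsym t \in row_syms T (trow t) by apply/imsetP; exists t; rewrite // inE tT /=.
  rewrite rowE => /imsetP [u]; rewrite inE => /andP[uT /eqP ur] us.
  by exists u => //; split; rewrite // -us.
have t0S : t0 \in S by rewrite inE t0T t0s eqxx.
have SP t : t \in S -> t \in T /\ tsym t = s by rewrite inE => /andP[? /eqP].
rewrite leqNgt; apply/negP => small.
have pos : 0 < #|S| by apply/card_gt0P; exists t0.
have : (#|S| == 1) || (#|S| == 2) by clear -pos small; lia.
case/orP => cS.
- case/cards1P: cS => x Sx.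
  have [u uT' [ur us]] := FC _ t0S.
  have [v vS vc] := FB _ uT' us.
  move: (t0S) (vS); rewrite Sx !inE => /eqP e0 /eqP ev; subst.
  have [xT _] := SP _ t0S.
  suff: u = x by move=> e; move: (nTT' _ uT'); rewrite e xT.
  by apply: trip_ext => //; rewrite us t0s.
- case/cards2P: cS => t1 [t2 [ne Sx]].
  have t1S : t1 \in S by rewrite Sx !inE eqxx.
  have t2S : t2 \in S by rewrite Sx !inE eqxx orbT.
  have [t1T t1s] := SP _ t1S; have [t2T t2s] := SP _ t2S.
  have ne12 : trow t1 != trow t2.
    apply: contra ne => /eqP e; apply/eqP; apply: Bp1_row; rewrite ?inB //.
    by rewrite t1s t2s.
  have bp : (k' * trow t1 + s) %% p < p by rewrite ltn_mod.
  have := orth s (Ordinal bp).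
  move/eqP; rewrite eqn_leq => /andP[_] /card_gt0P [[c1 c2]].
  rewrite !inE /trow/tcol/tsym /= => /andP[cL /eqP cB].
  have ink : (k' * trow t1 + s %% p) %% p = (k'.+1 * c1 + c2) %% p.
    by rewrite -cB modnDmr.
  case/orP: cL => [/andP[xT xB]|xT'].
  + rewrite mul1n in xB.
    suff: (c1, c2, s) = t1 by move=> e; move: xT; rewrite e t1T.
    apply: Bp1_row; [by rewrite inE /trow/tcol/tsym /= mul1n | exact: inB | | by rewrite t1s].
    rewrite /trow /=; apply: val_inj => /=; symmetry.
    rewrite (eqP xB) modn_mod in ink.
    apply: (@H1 _ _ _ _ _ pp _ (ltn_ord _) (ltn_ord c1) ink).
    by clear -k2 kp; lia.
  + have [t tS tr] := FA _ xT' erefl.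
    have [v vS vc] := FB _ xT' erefl.
    move: tr vc; rewrite /trow /tcol /= => tr vc.
    have ntT : (c1, c2, s) \notin T := nTT' _ xT'.
    have cases w : w \in S -> w = t1 \/ w = t2 by rewrite Sx !inE => /orP[] /eqP; [left|right].
    case: (cases _ tS) => et; case: (cases _ vS) => ev; subst t v.
    * have e : (c1, c2, s) = t1 by apply: trip_ext; rewrite /trow/tcol/tsym /= ?tr ?vc ?t1s.
      by move: ntT; rewrite e t1T.
    * have := @H2 _ k' _ _ (tcol t2) (ltn_ord (trow t1)) (ltn_ord (trow t2)).
      have := inB _ t2T; rewrite inE mul1n t2s => /eqP <-.
      rewrite -tr -vc in cB; move/(_ cB) => /val_inj e; by move: ne12; rewrite e eqxx.
    * have := @H3 _ _ _ _ (tcol t1) pp kp (ltn_ord (trow t1)) (ltn_ord (trow t2)).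
      have := inB _ t1T; rewrite inE mul1n t1s => /eqP <-.
      rewrite -tr -vc in cB; move/(_ cB) => /val_inj e; by move: ne12; rewrite e eqxx.
    * have e : (c1, c2, s) = t2 by apply: trip_ext; rewrite /trow/tcol/tsym /= ?tr ?vc ?t2s.
      by move: ntT; rewrite e t2T.
Qed.
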